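(* Let $K$ satisfy (K1) and (K2). For any $a,b\in[0,1]$, $$\sum_{k=1}^n\big(W_{nk}(a)-W_{nk}(b)\big)^2\le W\,n^{-1}h^{-3}\Big(\frac{8L_2}{\lambda_0}|a-b|\wedge h\Big)^2 .$$ In particular, if $\varepsilon_1,\dots,\varepsilon_n$ are i.i.d. $\mathcal N(0,\sigma^2)$, then $R_{a,b}:=\sum_{k=1}^nW_{nk}(a)\varepsilon_k-\sum_{k=1}^nW_{nk}(b)\varepsilon_k$ satisfies $\mathbb V(R_{a,b})\le\sigma^2Wn^{-1}h^{-3}\big(\frac{8L_2}{\lambda_0}|a-b|\wedge h\big)^2$.
   Context: $x_k=k/n$. (K1): $K$ nonnegative, $\int K=1$, supported in $[-1,1]$, $K_{\min}\mathbf 1_{\{|u|\le\Delta\}}\le K\le K_{\max}$ for constants $K_{\min},K_{\max},\Delta>0$. (K2): $K$ Lipschitz with constant $L_K$. For $\beta>0$ and $k_0=\lceil\beta\rceil-1$: $U(u)=(1,u,\dots,u^{k_0}/k_0!)^\top$, $\mathcal B_{nx}=\frac1{nh}\sum_lU(\tfrac{x_l-x}h)U(\tfrac{x_l-x}h)^\top K(\tfrac{x_l-x}h)$, $W_{nk}(x)=\frac1{nh}U(0)^\top\mathcal B_{nx}^{-1}U(\tfrac{x_k-x}h)K(\tfrac{x_k-x}h)$ (weights of the local polynomial estimator of order $k_0$, bandwidth $h$). Standing assumption: $h\ge1/(2n)$ and $\lambda_0>0$ is a constant with smallest eigenvalue of $\mathcal B_{nx}$ at least $\lambda_0$ for all $x\in[0,1]$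 ($n$ large). Constants: $C_*=8K_{\max}/\lambda_0$, $L_1=\sqrt e(L_K+K_{\max})$, $L_2=2\lceil\beta\rceil K_{\max}+\lceil\beta\rceil L_K$, $\widetilde C_*=L_1/(8L_2)+\sqrt eK_{\max}/\lambda_0$, $W=\max(4C_*^2,4\widetilde C_*^2)$. *)

(* Defs.v *)
From HB Require Import structures.
From mathcomp Require Import all_boot all_order all_algebra.
From mathcomp Require Import all_classical all_reals all_analysis.
Set Implicit Arguments. Unset Strict Implicit. Unset Printing Implicit Defensive.
Import Order.TTheory GRing.Theory Num.Theory.
Local Open Scope ring_scope.

Section LocPoly.
Variable R : realType.

(* k0 = ceil(beta) - 1 (a natural number since beta > 0) *)
Definition k0 (beta : R) : nat := `|Num.ceil beta - 1|%N.

Definition Uvec (k : nat) (u : R) : 'cV[R]_k.+1 :=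
  \col_(j < k.+1) (u ^+ j / (j`!)%:R).

Definition xpt (n l : nat) : R := l%:R / n%:R.

Definition Bmat (K : R -> R) (k n : nat) (h x : R) : 'M[R]_k.+1 :=
  (n%:R * h)^-1 *: \sum_(1 <= l < n.+1)
     (K ((xpt n l - x) / h) *: (Uvec k ((xpt n l - x) / h) *m (Uvec k ((xpt n l - x) / h))^T)).

Definition Wnk (K : R -> R) (k n : nat) (h x : R) (i : nat) : R :=
  (n%:R * h)^-1 *
  ((Uvec k 0)^T *m invmx (Bmat K k n h x) *m Uvec k ((xpt n i - x) / h)) ord0 ord0 *
  K ((xpt n i - x) / h).

Definition Cstar (Kmax lambda0 : R) : R := 8 * Kmax / lambda0.
Definition L1c (LK Kmax : R) : R := Num.sqrt (expR 1) * (LK + Kmax).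
Definition L2c (beta Kmax LK : R) : R :=
  2 * (Num.ceil beta)%:~R * Kmax + (Num.ceil beta)%:~R * LK.
Definition Ctilde (beta Kmax LK lambda0 : R) : R :=
  L1c LK Kmax / (8 * L2c beta Kmax LK) + Num.sqrt (expR 1) * Kmax / lambda0.
Definition Wconst (beta Kmax LK lambda0 : R) : R :=
  Num.max (4 * Cstar Kmax lambda0 ^+ 2) (4 * Ctilde beta Kmax LK lambda0 ^+ 2).

End LocPoly.

(* Main.v *)
Require Import Defs.
From HB Require Import structures.
From mathcomp Require Import all_boot all_order all_algebra.
From mathcomp Require Import all_classical all_reals all_analysis.
From mathcomp Require Import ring lra zify.
Import Order.TTheory GRing.Theory Num.Theory.
Local Open Scope ring_scope.
Set Implicit Arguments. Unset Strict Implicit. Unset Printing Implicit Defensive.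

Section LA.
Variable R : realType.

Lemma quad_disc (a b c : R) : 0 <= a ->
  (forall t, 0 <= a * t ^+ 2 + 2 * b * t + c) -> b ^+ 2 <= a * c.
Proof.
move=> a0 H; rewrite le0r in a0; case/orP: a0 => [/eqP a0|ap].
  subst a; rewrite mul0r.
  have [b0|bn0] := eqVneq b 0; first by rewrite b0 expr0n.
  have := H (- (c + 1) / (2 * b)).
  have -> : 0 * (- (c + 1) / (2 * b)) ^+ 2 + 2 * b * (- (c + 1) / (2 * b)) + c = -1.
    by field.
  by rewrite ler0N1.
set t := - b / a.
have E : a * (a * t ^+ 2 + 2 * b * t + c) = a * c - b ^+ 2.
  by rewrite /t; field; rewrite lt0r_neq0.
by have := mulr_ge0 (ltW ap) (H t); rewrite E subr_ge0.
Qed.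
End LA.
Section LA2.
Variable R : realType.
Variable m : nat.

Lemma CS_sum (a b : 'I_m -> R) :
  (\sum_i a i * b i) ^+ 2 <= (\sum_i b i ^+ 2) * (\sum_i a i ^+ 2).
Proof.
apply: quad_disc; first by apply: sumr_ge0 => i _; apply: sqr_ge0.
move=> t.
have -> : (\sum_i b i ^+ 2) * t ^+ 2 + 2 * (\sum_i a i * b i) * t + \sum_i a i ^+ 2
   = \sum_i (a i + t * b i) ^+ 2.
  rewrite [RHS](eq_bigr (fun i => b i ^+2 * t^+2 + 2 * (a i * b i) * t + a i ^+ 2)); last by move=> i _; ring.
  by rewrite !big_split /= -!mulr_suml -mulr_sumr.
by apply: sumr_ge0 => i _; apply: sqr_ge0.
Qed.

Lemma amgm1 (x y t : R) : 0 < t -> x * y <= (t * x ^+ 2 + t^-1 * y ^+ 2) / 2.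
Proof.
move=> tp.
have H : 0 <= t^-1 * (t * x - y) ^+ 2 by apply: mulr_ge0; [rewrite invr_ge0 ltW|apply: sqr_ge0].
have E : t^-1 * (t * x - y) ^+ 2 = t * x ^+ 2 - 2 * (x * y) + t^-1 * y ^+ 2.
  by field; rewrite lt0r_neq0.
rewrite E in H; lra.
Qed.

Lemma dot_le_amgm (a b : 'I_m -> R) (t : R) : 0 < t ->
  \sum_i a i * b i <= (t * \sum_i a i ^+ 2 + t^-1 * \sum_i b i ^+ 2) / 2.
Proof.
move=> tp.
rewrite !mulr_sumr -big_split mulr_suml /=.
by apply: ler_sum => i _; apply: amgm1.
Qed.
End LA2.
Section LA3.
Variable R : realType.
Variable m : nat.
Implicit Types (u v w : 'cV[R]_m) (M N : 'M[R]_m).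

Definition sqn v := \sum_i (v i 0) ^+ 2.
Definition frob M := \sum_i \sum_j (M i j) ^+ 2.
Definition qf M v := \sum_i v i 0 * (M *m v) i 0.
Definition dotv u v := \sum_i u i 0 * v i 0.

Lemma sqn_ge0 v : 0 <= sqn v.
Proof. by apply: sumr_ge0 => i _; apply: sqr_ge0. Qed.

Lemma frob_ge0 M : 0 <= frob M.
Proof. by apply: sumr_ge0 => i _; apply: sumr_ge0 => j _; apply: sqr_ge0. Qed.

Lemma sqn_eq0 v : sqn v = 0 -> v = 0.
Proof.
move=> H; apply/matrixP => i j; rewrite ord1 mxE.
have := psumr_eq0P (fun k _ => sqr_ge0 (v k 0)) H; move=> /(_ i isT).
by move/eqP; rewrite sqrf_eq0 => /eqP.
Qed.

Lemma sqn_gt0 v : v != 0 -> 0 < sqn v.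
Proof.
move=> vn0; rewrite lt_neqAle sqn_ge0 andbT eq_sym.
by apply/negP => /eqP /sqn_eq0 H; rewrite H eqxx in vn0.
Qed.

Lemma MV_bound M v : sqn (M *m v) <= frob M * sqn v.
Proof.
rewrite /sqn /frob mulr_suml; apply: ler_sum => i _.
rewrite mxE [X in _ <= X]mulrC; exact: (@CS_sum R m (fun j => M i j) (fun j => v j 0)).
Qed.

Lemma dot_amgm u v (t : R) : 0 < t -> dotv u v <= (t * sqn u + t^-1 * sqn v) / 2.
Proof. by move=> tp; apply: dot_le_amgm. Qed.

Lemma qf_sub_scalar M (mu : R) v : qf (M - mu%:M) v = qf M v - mu * sqn v.
Proof.
rewrite /qf /sqn mulr_sumr -sumrB; apply: eq_bigr => i _.
rewrite mulmxBl mul_scalar_mx !mxE; ring.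
Qed.

Lemma sym_swap N v w : (forall i j, N i j = N j i) ->
  \sum_i v i 0 * (N *m w) i 0 = \sum_i w i 0 * (N *m v) i 0.
Proof.
move=> Ns.
under eq_bigr do rewrite mxE mulr_sumr.
rewrite exchange_big /=; apply: eq_bigr => j _.
rewrite mxE mulr_sumr; apply: eq_bigr => i _.
by rewrite Ns; ring.
Qed.

Lemma psd_CS N v w : (forall i j, N i j = N j i) -> (forall x, 0 <= qf N x) ->
  (\sum_i w i 0 * (N *m v) i 0) ^+ 2 <= qf N w * qf N v.
Proof.
move=> Ns Np; apply: quad_disc; first exact: Np.
move=> t; have := Np (v + t *: w).
have -> : qf N (v + t *: w) = qf N w * t ^+ 2 + 2 * (\sum_i w i 0 * (N *m v) i 0) * t + qf N v.
  rewrite /qf mulmxDr -scalemxAr.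
  have E := sym_swap v w Ns.
  transitivity (\sum_i (v i 0 * (N *m v) i 0) + t * \sum_i (v i 0 * (N *m w) i 0) +
       t * \sum_i (w i 0 * (N *m v) i 0) + t ^+ 2 * \sum_i (w i 0 * (N *m w) i 0)).
    rewrite !mulr_sumr -!big_split /=; apply: eq_bigr => i _; rewrite !mxE; ring.
  rewrite E; ring.
done.
Qed.

End LA3.
Section LA4.
Variable R : realType.
Variable m : nat.
Implicit Types (u v w : 'cV[R]_m) (M N : 'M[R]_m).

Lemma qf0 M : qf M 0 = 0.
Proof. by rewrite /qf big1 // => i _; rewrite mxE mul0r. Qed.

Lemma sqn0 : sqn (0 : 'cV[R]_m) = 0.
Proof. by rewrite /sqn big1 // => i _; rewrite mxE expr0n. Qed.

Lemma PD_bound N : (forall i j, N i j = N j i) -> (forall x, 0 <= qf N x) ->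
  N \in unitmx -> exists2 c, 0 < c & forall v, c * sqn v <= qf N v.
Proof.
move=> Ns Np Nu.
set F := frob N; set F' := frob (invmx N).
set D := F' * ((1 + F) / 2).
have F0 : 0 <= F by apply: frob_ge0.
have F'0 : 0 <= F' by apply: frob_ge0.
have D0 : 0 <= D by apply: mulr_ge0 => //; apply: divr_ge0 => //; lra.
exists (D + 1)^-1; first by rewrite invr_gt0; lra.
move=> v.
set w := N *m v.
have Hw : sqn w <= (1 + F) / 2 * qf N v.
  have H1 : \sum_i w i 0 * (N *m v) i 0 = sqn w.
    by rewrite /sqn; apply: eq_bigr => i _; rewrite expr2.
  have H2 := psd_CS v w Ns Np; rewrite H1 in H2.
  have H3 : qf N w <= (1 + F) / 2 * sqn w.
    have := dot_amgm w (N *m w) ltr01.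
    rewrite invr1 !mul1r => H; apply: (le_trans H).
    have := MV_bound N w; rewrite -/F => H'.
    have -> : (1 + F) / 2 * sqn w = (sqn w + F * sqn w) / 2 by ring.
    lra.
  have sw0 := sqn_ge0 w.
  have qv0 := Np v.
  rewrite le0r in sw0; case/orP: sw0 => [/eqP ->|swp].
    by apply: mulr_ge0 => //; apply: divr_ge0 => //; lra.
  have H4 : sqn w ^+ 2 <= (1 + F) / 2 * sqn w * qf N v.
    apply: (le_trans H2); apply: ler_wpM2r => //.
  rewrite -(ler_pM2r swp) -expr2; apply: (le_trans H4).
  by rewrite le_eqVlt; apply/orP; left; apply/eqP; ring.
have Hv : sqn v <= D * qf N v.
  have Hvw : sqn v <= F' * sqn w by have := MV_bound (invmx N) w; rewrite /w mulKmx.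
  apply: (le_trans Hvw); rewrite /D -mulrA.
  by apply: ler_wpM2l.
have qv0 := Np v.
rewrite mulrC ler_pdivrMr; last by lra.
nra.
Qed.

Lemma rayleigh M (lam : R) : (forall i j, M i j = M j i) -> (forall x, 0 <= qf M x) ->
  (forall mu, eigenvalue M mu -> lam <= mu) -> forall v, lam * sqn v <= qf M v.
Proof.
move=> Ms Mp Mev v.
have [->|vn0] := eqVneq v 0; first by rewrite qf0 sqn0 mulr0.
pose S := [set r : R | exists2 u : 'cV[R]_m, u != 0 & r = qf M u / sqn u]%classic.
have S0 : (S !=set0)%classic by exists (qf M v / sqn v); exists v.
have Slb : has_lbound S.
  exists 0 => r [u un0 ->]; apply: divr_ge0; [exact: Mp|exact: sqn_ge0].
set mu := inf S.
have Hmu : forall u, mu * sqn u <= qf M u.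
  move=> u; have [->|un0] := eqVneq u 0; first by rewrite qf0 sqn0 mulr0.
  have := ge_inf Slb; move=> /(_ (qf M u / sqn u)) H.
  have : mu <= qf M u / sqn u by apply: H; exists u.
  by rewrite ler_pdivlMr // sqn_gt0.
set N := M - mu%:M.
have Ns : forall i j, N i j = N j i.
  by move=> i j; rewrite !mxE Ms eq_sym.
have Np : forall x, 0 <= qf N x.
  by move=> x; rewrite qf_sub_scalar subr_ge0.
case: (boolP (\det N == 0)) => [/det0P [r rn0 rN]|dn0].
  have : eigenvalue M mu.
    apply/eigenvalueP; exists r => //.
    by move: rN; rewrite /N mulmxBr mul_mx_scalar => /eqP; rewrite subr_eq0 => /eqP.
  move=> /Mev lmu; apply: le_trans (Hmu v).
  by apply: ler_wpM2r => //; apply: sqn_ge0.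
have Nu : N \in unitmx by rewrite unitmxE unitfE.
have [c cp Hc] := PD_bound Ns Np Nu.
have : mu + c <= mu.
  rewrite /mu; apply: lb_le_inf => // r [u un0 ->].
  rewrite ler_pdivlMr ?sqn_gt0 //.
  have := Hc u; rewrite qf_sub_scalar; lra.
lra.
Qed.
End LA4.
Section LA5.
Variable R : realType.
Variable m : nat.
Implicit Types (u v w : 'cV[R]_m) (M N : 'M[R]_m).

Lemma inv_bound M (lam : R) : 0 < lam -> (forall v, lam * sqn v <= qf M v) ->
  M \in unitmx /\ forall u, sqn (invmx M *m u) <= sqn u / lam ^+ 2.
Proof.
move=> lp H.
have Mu : M \in unitmx.
  rewrite unitmxE unitfE; apply/negP => /det0P [r rn0 rM].
  have vn0 : r^T != 0 by apply: contra rn0 => /eqP; rewrite -trmx0 => /trmx_inj ->.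
  have : qf M r^T = 0.
    rewrite /qf.
    transitivity (\sum_j (r *m M) 0 j * r 0 j); last by rewrite rM big1 // => j _; rewrite mxE mul0r.
    under eq_bigr => i _ do rewrite [(M *m _) _ _]mxE mulr_sumr.
    rewrite exchange_big /=; apply: eq_bigr => j _.
    rewrite [(r *m M) _ _]mxE mulr_suml; apply: eq_bigr => i _; rewrite !mxE; ring.
  move=> q0; have := H r^T; rewrite q0.
  have := sqn_gt0 vn0; move=> sp; rewrite pmulr_rle0 // => sl.
  by have := lt_le_trans sp sl; rewrite ltxx.
split=> // u.
set w := invmx M *m u.
have Hw : M *m w = u by rewrite /w mulKVmx.
have H1 := H w.
have H2 : qf M w = dotv w u by rewrite /qf Hw.
have H3 := dot_amgm w u lp.
rewrite H2 in H1.
have H4 : lam * sqn w <= lam^-1 * sqn u.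
  have := le_trans H1 H3; lra.
have H5 : sqn w <= lam^-1 * (lam^-1 * sqn u).
  by rewrite -(ler_pM2l lp) mulVKf ?lt0r_neq0.
have -> : sqn u / lam ^+ 2 = lam^-1 * (lam^-1 * sqn u) by field; rewrite lt0r_neq0.
exact: H5.
Qed.
End LA5.
Lemma absXX_le (R : realType) (z z' : R) (r : nat) : `|z| <= 1 -> `|z'| <= 1 ->
  `|z ^+ r - z' ^+ r| <= r%:R * `|z - z'|.
Proof.
move=> hz hz'; rewrite subrXX normrM mulrC; apply: ler_wpM2r => //.
apply: (le_trans (ler_norm_sum _ _ _)).
apply: le_trans (_ : \sum_(i < r) (1 : R) <= _); last by rewrite sumr_const card_ord.
apply: ler_sum => i _; rewrite normrM !normrX.
by apply: mulr_ile1 => //; apply: exprn_ile1.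
Qed.

Section Phi.
Variable R : realType.
Variable K : R -> R.
Variables Kmax LK : R.
Hypothesis K_ge0 : forall u, 0 <= K u.
Hypothesis K_supp : forall u, 1 < `|u| -> K u = 0.
Hypothesis K_ub : forall u, K u <= Kmax.
Hypothesis K_lip : forall u v, `|K u - K v| <= LK * `|u - v|.
Hypothesis LK0 : 0 <= LK.
Hypothesis Kmax0 : 0 < Kmax.

Definition ind (z : R) : R := ((`|z| <= 1)%R : bool)%:R.
Definition indo (z z' : R) : R := (((`|z| <= 1)%R || (`|z'| <= 1)%R) : bool)%:R.
Definition phi (r : nat) (z : R) := K z * z ^+ r.

Lemma phi_bound r z : `|phi r z| <= Kmax * ind z.
Proof.
rewrite /phi /ind; case: (leP `|z| 1) => hz /=; rewrite ?mulr1n ?mulr0n.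
  rewrite mulr1 normrM ger0_norm // -[X in _ <= X]mulr1.
  apply: ler_pM => //; rewrite normrX; exact: exprn_ile1.
by rewrite K_supp // mul0r normr0 mulr0.
Qed.

Lemma phi_lip r z z' : `|phi r z - phi r z'| <= (LK + r%:R * Kmax) * `|z - z'| * indo z z'.
Proof.
have H0 : 0 <= (LK + r%:R * Kmax) * `|z - z'|.
  by apply: mulr_ge0 => //; apply: addr_ge0 => //; apply: mulr_ge0 => //; exact: ltW.
rewrite /phi /indo.
case: (leP `|z| 1) => hz; case: (leP `|z'| 1) => hz' /=; rewrite ?mulr1n ?mulr0n ?mulr1.
- have -> : K z * z ^+ r - K z' * z' ^+ r = (K z - K z') * z ^+ r + K z' * (z ^+ r - z' ^+ r) by ring.
  apply: (le_trans (ler_normD _ _)); rewrite [X in _ <= X]mulrDl.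
  apply: lerD.
    rewrite normrM -[X in _ <= X]mulr1 ler_pM //; rewrite normrX; exact: exprn_ile1.
  rewrite normrM ger0_norm // [r%:R * Kmax]mulrC -mulrA; apply: ler_pM => //.
  exact: absXX_le.
- rewrite (K_supp hz') mul0r subr0 normrM ger0_norm //.
  apply: le_trans (_ : LK * `|z - z'| <= _).
    rewrite -[X in _ <= X]mulr1; apply: ler_pM => //.
      by have := K_lip z z'; rewrite (K_supp hz') subr0 ger0_norm.
    rewrite normrX; exact: exprn_ile1.
  by apply: ler_wpM2r => //; rewrite lerDl; apply: mulr_ge0 => //; exact: ltW.
- rewrite (K_supp hz) mul0r sub0r normrN normrM ger0_norm //.
  apply: le_trans (_ : LK * `|z - z'| <= _).
    rewrite -[X in _ <= X]mulr1; apply: ler_pM => //.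
      by have := K_lip z' z; rewrite (K_supp hz) subr0 ger0_norm // distrC.
    rewrite normrX; exact: exprn_ile1.
  by apply: ler_wpM2r => //; rewrite lerDl; apply: mulr_ge0 => //; exact: ltW.
- by rewrite (K_supp hz) (K_supp hz') !mul0r subr0 normr0 mulr0.
Qed.

End Phi.
Lemma cnt_nat (a M N : nat) :
  (\sum_(0 <= l < N) ((a <= l) && (l <= a + M) : nat) = minn N (a + M).+1 - a)%N.
Proof.
elim: N => [|N IH]; first by rewrite big_nil.
rewrite big_nat_recr //= IH.
case: (leqP a N) => h1; case: (leqP N (a + M)) => h2 /=; rewrite ?h1 ?h2 /=; lia.
Qed.

Lemma count_le (R : realType) (c r : R) (N : nat) : 0 <= r ->
  \sum_(0 <= l < N) (((`|l%:R - c| <= r)%R : bool) : nat)%:R <= 2 * r + 1.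
Proof.
move=> r0.
pose P := fun l : nat => (l < N)%N && (`|l%:R - c| <= r).
case: (boolP [exists l : 'I_N, `|(l : nat)%:R - c| <= r]) => [/existsP ex|nex].
  have exP : exists l, P l by case: ex => l hl; exists l; rewrite /P ltn_ord hl.
  case: (ex_minnP exP) => l0 /andP [l0N Pl0] l0min.
  set M := Num.truncn (2 * r).
  have key : forall l, (l < N)%N -> `|l%:R - c| <= r -> (l0 <= l)%N && (l <= l0 + M)%N.
    move=> l lN hl; have h0 : (l0 <= l)%N by apply: l0min; rewrite /P lN hl.
    rewrite h0 /=.
    rewrite -leq_subLR truncn_ge_nat; last by lra.
    rewrite natrB //.
    have := ler_normD (l%:R - c) (c - l0%:R); rewrite distrC in Pl0.
    have -> : l%:R - c + (c - l0%:R) = l%:R - l0%:R :> R by ring.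
    move=> hh; have := ler_norm (l%:R - l0%:R : R); lra.
  apply: le_trans (_ : \sum_(0 <= l < N) (((l0 <= l)%N && (l <= l0 + M)%N) : nat)%:R <= _).
    rewrite !big_nat; apply: ler_sum => l /andP [_ lN].
    case: (boolP (`|l%:R - c| <= r)) => hl /=; last by case: (_ && _).
    by rewrite (key l lN hl).
  rewrite -natr_sum cnt_nat.
  apply: le_trans (_ : M.+1%:R <= _).
    rewrite ler_nat; lia.
  rewrite -addn1 natrD lerD2r truncn_le; lra.
rewrite big1_seq; first by lra.
move=> l; rewrite mem_iota add0n subn0 => /andP [_ lN].
case: (boolP (`|l%:R - c| <= r)) => hl //=.
by move: nex; rewrite negb_exists => /forallP /(_ (Ordinal lN)) /= /negP.
Qed.
Definition wt (R : realType) (i : nat) : R := (maxn 1 i)%:R / (i`!)%:R.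

Lemma fact_ge_pow2 m : (2 ^ m <= m.+1`!)%N.
Proof.
elim: m => [//|m IH]; rewrite expnS factS.
apply: leq_mul => //.
Qed.

Lemma wt_ge0 (R : realType) i : 0 <= wt R i.
Proof. by rewrite /wt divr_ge0. Qed.

Lemma inv_fact_le_wt (R : realType) i : (i`!)%:R^-1 <= wt R i.
Proof.
rewrite /wt -[X in X <= _]mul1r; apply: ler_wpM2r; first by rewrite invr_ge0 ler0n.
by rewrite ler1n leq_maxl.
Qed.

Lemma wt_step (R : realType) m : wt R m.+2 ^+ 2 <= (4^-1) ^+ m.
Proof.
have -> : wt R m.+2 = (m.+1`!)%:R^-1.
  rewrite /wt factS natrM (maxn_idPr _) //.
  field; apply/andP; split; first by rewrite pnatr_eq0 -lt0n fact_gt0.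
  by apply: lt0r_neq0; have := ler0n R m; lra.
have -> : (4^-1 : R) ^+ m = (((2 ^ m)%N)%:R ^+ 2)^-1.
  by rewrite natrX -exprM mulnC exprM -exprVn; congr (_ ^+ _); rewrite expr2 -natrM.
rewrite exprVn lef_pV2 ?posrE ?exprn_gt0 ?ltr0n ?expn_gt0 ?fact_gt0 //.
rewrite ler_sqr ?nnegrE ?ler0n //. by rewrite ler_nat fact_ge_pow2.
Qed.

Lemma wt_sum_aux (R : realType) m :
  \sum_(0 <= i < m.+2) wt R i ^+ 2 + 4/3 * (4^-1) ^+ m <= 10/3.
Proof.
elim: m => [|m IH].
  rewrite big_nat_recr //= big_nat_recr //= big_nil /wt /=.
  rewrite (maxn_idPl _) // (maxn_idPl _) // !fact0 !factS fact0 expr0 !divr1; lra.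
rewrite big_nat_recr //=.
have := wt_step R m.
have -> : (4^-1 : R) ^+ m.+1 = 4^-1 * (4^-1) ^+ m by rewrite exprS.
lra.
Qed.

Lemma wt_sum (R : realType) m : \sum_(i < m) wt R i ^+ 2 <= 10/3.
Proof.
rewrite -(big_mkord xpredT (fun i => wt R i ^+ 2)).
apply: le_trans (wt_sum_aux R m).
have H1 : 0 <= 4/3 * (4^-1 : R) ^+ m by apply: mulr_ge0; [lra|apply: exprn_ge0; lra].
rewrite big_nat_recr //= big_nat_recr //=.
have := sqr_ge0 (wt R m); have := sqr_ge0 (wt R m.+1); lra.
Qed.
Lemma sq_le (R : realType) (x y : R) : `|x| <= y -> x ^+ 2 <= y ^+ 2.
Proof.
move=> H; rewrite -real_normK ?num_real // !expr2.
by apply: ler_pM => //; apply: normr_ge0.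
Qed.

Section Model.
Variables (R : realType) (K : R -> R) (Kmax LK : R).
Hypothesis K_ge0 : forall u, 0 <= K u.
Hypothesis K_supp : forall u, 1 < `|u| -> K u = 0.
Hypothesis K_ub : forall u, K u <= Kmax.
Hypothesis K_lip : forall u v, `|K u - K v| <= LK * `|u - v|.
Hypothesis LK0 : 0 <= LK.
Hypothesis Kmax0 : 0 < Kmax.
Variables (k n : nat) (h : R).
Hypothesis n_gt0 : (0 < n)%N.
Hypothesis h_ge : 1 / (2 * n%:R) <= h.

Definition zz (x : R) (l : nat) := (xpt R n l - x) / h.
Definition gv (z : R) : 'cV[R]_k.+1 := K z *: Uvec k z.

Lemma n_pos : 0 < n%:R :> R.
Proof. by rewrite ltr0n. Qed.

Lemma h_gt0 : 0 < h.
Proof. apply: lt_le_trans h_ge; apply: divr_gt0 => //; apply: mulr_gt0 => //; exact: n_pos. Qed.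

Lemma nh_gt0 : 0 < n%:R * h.
Proof. by apply: mulr_gt0; [exact: n_pos|exact: h_gt0]. Qed.

Lemma nh_ge : 1 <= 2 * (n%:R * h).
Proof.
have np := n_pos.
have := h_ge; rewrite ler_pdivrMr ?mulr_gt0 //; lra.
Qed.

Lemma ind_zz x l : ind (zz x l) = ((`|l%:R - n%:R * x| <= n%:R * h)%R : bool)%:R.
Proof.
rewrite /ind /zz /xpt; congr ((_ : bool)%:R).
have np := n_pos; have hp := h_gt0.
have -> : (l%:R / n%:R - x) / h = (l%:R - n%:R * x) / (n%:R * h).
  by field; rewrite !lt0r_neq0.
have nhp : 0 < n%:R * h by apply: mulr_gt0.
rewrite normrM [`|(_ * h)^-1|]ger0_norm; last by rewrite invr_ge0 ltW.
by rewrite ler_pdivrMr // mul1r.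
Qed.

Lemma Nx_le x : \sum_(1 <= l < n.+1) ind (zz x l) <= 4 * (n%:R * h).
Proof.
have hnh := nh_ge.
apply: le_trans (_ : \sum_(0 <= l < n.+1) ind (zz x l) <= _).
  rewrite [X in _ <= X](@big_ltn _ _ _ 0) // lerDr /ind; exact: ler0n.
under eq_bigr do rewrite ind_zz.
have := @count_le _ (n%:R * x) (n%:R * h) n.+1 (ltW nh_gt0).
move=> H; apply: (le_trans H); lra.
Qed.

Lemma Uvec_entry (z : R) (i : 'I_k.+1) : Uvec k z i 0 = z ^+ i / (i`!)%:R.
Proof. by rewrite mxE. Qed.

Lemma B_entry x (i j : 'I_k.+1) : Bmat K k n h x i j =
  (n%:R * h)^-1 * \sum_(1 <= l < n.+1) phi K (i + j) (zz x l) / ((i`!)%:R * (j`!)%:R).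
Proof.
rewrite /Bmat mxE summxE; congr (_ * _); apply: eq_bigr => l _.
rewrite mxE mxE big_ord1 !mxE /phi /zz exprD.
field; apply/andP; split; by rewrite pnatr_eq0 -lt0n fact_gt0.
Qed.

Lemma B_sym x (i j : 'I_k.+1) : Bmat K k n h x i j = Bmat K k n h x j i.
Proof. by rewrite !B_entry addnC [((i`!)%:R * _)]mulrC. Qed.

Lemma W_form x l : Wnk K k n h x l = (n%:R * h)^-1 * (invmx (Bmat K k n h x) *m gv (zz x l)) 0 0.
Proof.
rewrite /Wnk /gv -scalemxAr [in RHS]mxE -mulrA -mulmxA; congr (_ * _); rewrite mulrC /zz; congr (_ * _).
rewrite mxE (bigD1 ord0) //= big1 ?addr0.
  by rewrite !mxE expr0 fact0 divr1 mul1r.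
move=> j jn0; rewrite !mxE expr0n.
case: (nat_of_ord j =P 0%N) => [j0|]; last by rewrite !mul0r.
by move: jn0; have -> : j = ord0 by apply: val_inj.
Qed.


Lemma B_psd x v : 0 <= qf (Bmat K k n h x) v.
Proof.
set c := (n%:R * h)^-1.
pose u l (i : 'I_k.+1) := Uvec k (zz x l) i 0.
have E : qf (Bmat K k n h x) v =
    c * \sum_(1 <= l < n.+1) K (zz x l) * (\sum_i v i 0 * u l i) ^+ 2.
  rewrite /qf.
  transitivity (\sum_i \sum_j \sum_(1 <= l < n.+1) c * (K (zz x l) * ((v i 0 * u l i) * (v j 0 * u l j)))).
    apply: eq_bigr => i _; rewrite mxE mulr_sumr; apply: eq_bigr => j _.
    rewrite /Bmat mxE summxE !mulr_sumr mulr_suml !mulr_sumr; apply: eq_bigr => l _.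
    rewrite !mxE big_ord1 !mxE /u /zz !mxE /c; ring.
  rewrite mulr_sumr.
  transitivity (\sum_i \sum_(1 <= l < n.+1) \sum_j c * (K (zz x l) * ((v i 0 * u l i) * (v j 0 * u l j)))).
    by apply: eq_bigr => i _; rewrite exchange_big.
  rewrite exchange_big; apply: eq_bigr => l _.
  rewrite expr2 mulr_suml !mulr_sumr; apply: eq_bigr => i _.
  rewrite !mulr_sumr; apply: eq_bigr => j _; ring.
rewrite E; apply: mulr_ge0; first by rewrite invr_ge0 ltW // nh_gt0.
by apply: sumr_ge0 => l _; apply: mulr_ge0 => //; apply: sqr_ge0.
Qed.

Lemma first_entry_sq (Y : 'cV[R]_k.+1) : (Y 0 0) ^+ 2 <= sqn Y.
Proof.
rewrite /sqn (bigD1 ord0) //= lerDl.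
by apply: sumr_ge0 => i _; apply: sqr_ge0.
Qed.

Lemma ind01 (z : R) : ind z = 0 \/ ind z = 1.
Proof. by rewrite /ind; case: (_ <= _); [right|left]. Qed.

Lemma indo01 (z z' : R) : indo z z' = 0 \/ indo z z' = 1.
Proof. by rewrite /indo; case: (_ || _); [right|left]. Qed.

Lemma indo_le (z z' : R) : indo z z' <= ind z + ind z'.
Proof.
by rewrite /indo /ind; case: (_ <= 1); case: (_ <= 1) => /=; rewrite ?mulr1n ?mulr0n; lra.
Qed.

Lemma gv_entry (z : R) (i : 'I_k.+1) : gv z i 0 = phi K i z / (i`!)%:R.
Proof. by rewrite /gv !mxE /phi mulrA. Qed.

Lemma sqn_gv (z : R) : sqn (gv z) <= 10/3 * Kmax ^+ 2 * ind z.
Proof.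
rewrite /sqn.
apply: le_trans (_ : \sum_(i < k.+1) (Kmax ^+ 2 * ind z) * wt R i ^+ 2 <= _).
  apply: ler_sum => i _; rewrite gv_entry.
  have -> : (Kmax ^+ 2 * ind z) * wt R i ^+ 2 = (Kmax * ind z * wt R i) ^+ 2.
    case: (ind01 z) => ->; rewrite ?expr1n; ring.
  apply: sq_le; rewrite normrM.
  apply: ler_pM => //; first exact: phi_bound.
  by rewrite ger0_norm ?invr_ge0 // inv_fact_le_wt.
rewrite -mulr_sumr (_ : 10/3 * Kmax ^+ 2 * ind z = Kmax ^+ 2 * ind z * (10/3)); last by ring.
apply: ler_wpM2l; last exact: wt_sum.
by apply: mulr_ge0; [apply: sqr_ge0|case: (ind01 z) => ->; lra].
Qed.


Definition Lp := LK + 2 * Kmax.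

Lemma Lp_ge0 : 0 <= Lp.
Proof. rewrite /Lp. have := Kmax0. have := LK0. lra. Qed.

Lemma coef_le (i : nat) : LK + i%:R * Kmax <= Lp * (maxn 1 i)%:R.
Proof.
have m1 : 1 <= (maxn 1 i)%:R :> R by rewrite ler1n leq_maxl.
have im : i%:R <= (maxn 1 i)%:R :> R by rewrite ler_nat leq_maxr.
set m := (maxn 1 i)%:R in m1 im *.
have := Kmax0; have := LK0; move=> LK0' Kmax0'.
have h1 : LK <= LK * m by rewrite ler_peMr.
have h2 : i%:R * Kmax <= m * Kmax by rewrite ler_wpM2r // ltW.
have h3 : 0 <= m * Kmax by apply: mulr_ge0; [lra|exact: ltW].
rewrite /Lp (_ : (LK + 2 * Kmax) * m = LK * m + 2 * (m * Kmax)); last by ring.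
lra.
Qed.

Lemma coef2_le (i j : nat) :
  LK + (i + j)%:R * Kmax <= Lp * ((maxn 1 i)%:R * (maxn 1 j)%:R).
Proof.
have mi1 : 1 <= (maxn 1 i)%:R :> R by rewrite ler1n leq_maxl.
have im : i%:R <= (maxn 1 i)%:R :> R by rewrite ler_nat leq_maxr.
have mj1 : 1 <= (maxn 1 j)%:R :> R by rewrite ler1n leq_maxl.
have jm : j%:R <= (maxn 1 j)%:R :> R by rewrite ler_nat leq_maxr.
set p := (maxn 1 i)%:R * (maxn 1 j)%:R.
have mi0 : 0 <= (maxn 1 i)%:R :> R by apply: ler0n.
have mj0 : 0 <= (maxn 1 j)%:R :> R by apply: ler0n.
have mimj : (maxn 1 i)%:R <= p by rewrite /p ler_peMr.
have mjmi : (maxn 1 j)%:R <= p by rewrite /p ler_peMl.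
have p1 : 1 <= p by apply: le_trans mimj.
have ip : i%:R <= p by apply: le_trans mimj.
have jp : j%:R <= p by apply: le_trans mjmi.
have := Kmax0; have := LK0; move=> LK0' Kmax0'.
have h1 : LK <= LK * p by rewrite ler_peMr.
have h2 : i%:R * Kmax <= p * Kmax by rewrite ler_wpM2r // ltW.
have h2' : j%:R * Kmax <= p * Kmax by rewrite ler_wpM2r // ltW.
rewrite natrD /Lp (_ : (LK + 2 * Kmax) * p = LK * p + 2 * (p * Kmax)); last by ring.
rewrite mulrDl; lra.
Qed.

Lemma fact_pos (i : nat) : 0 < (i`!)%:R :> R.
Proof. by rewrite ltr0n fact_gt0. Qed.

Lemma sqn_dgv (z z' : R) : sqn (gv z - gv z') <= 10/3 * Lp ^+ 2 * (z - z') ^+ 2 * indo z z'.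
Proof.
rewrite /sqn.
set X := Lp ^+ 2 * (z - z') ^+ 2 * indo z z'.
apply: le_trans (_ : \sum_(i < k.+1) X * wt R i ^+ 2 <= _).
  apply: ler_sum => i _.
  have -> : (gv z - gv z') i 0 = gv z i 0 - gv z' i 0 by rewrite !mxE.
  rewrite !gv_entry.
  have -> : X * wt R i ^+ 2 = (Lp * wt R i * (`|z - z'| * indo z z')) ^+ 2.
    rewrite /X -[(z - z') ^+ 2]real_normK ?num_real //.
    case: (indo01 z z') => ->; rewrite ?expr1n; ring.
  apply: sq_le; rewrite -mulrBl normrM [`|(_ `!)%:R^-1|]ger0_norm ?invr_ge0 ?ler0n //.
  have H1 := phi_lip K_ge0 K_supp K_ub K_lip LK0 Kmax0 i z z'.
  apply: le_trans (_ : (LK + i%:R * Kmax) * (`|z - z'| * indo z z') * (i`!)%:R^-1 <= _).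
    by apply: ler_wpM2r; [rewrite invr_ge0 ler0n|rewrite mulrA].
  rewrite mulrAC; apply: ler_wpM2r.
    by apply: mulr_ge0 => //; case: (indo01 z z') => ->; lra.
  rewrite /wt mulrA; apply: ler_wpM2r; first by rewrite invr_ge0 ler0n.
  exact: coef_le.
rewrite -mulr_sumr (_ : 10/3 * Lp ^+ 2 * (z - z') ^+ 2 * indo z z' = X * (10/3)); last by rewrite /X; ring.
apply: ler_wpM2l; last exact: wt_sum.
rewrite /X; apply: mulr_ge0; first by apply: mulr_ge0; apply: sqr_ge0.
by case: (indo01 z z') => ->; lra.
Qed.


Lemma zz_diff a b l : zz b l - zz a l = (a - b) / h.
Proof. rewrite /zz; have := h_gt0; move=> hp; field; exact: lt0r_neq0. Qed.

Lemma dB_entry a b (i j : 'I_k.+1) :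
  `|(Bmat K k n h b - Bmat K k n h a) i j| <= 8 * Lp * `|(a - b) / h| * (wt R i * wt R j).
Proof.
have nhp := nh_gt0.
have -> : (Bmat K k n h b - Bmat K k n h a) i j = Bmat K k n h b i j - Bmat K k n h a i j by rewrite !mxE.
rewrite !B_entry -mulrBr -sumrB normrM [`|(_ * h)^-1|]ger0_norm; last by rewrite invr_ge0 ltW.
set f := ((i`!)%:R * (j`!)%:R : R).
have fp : 0 < f by apply: mulr_gt0; apply: fact_pos.
set Y := Lp * (wt R i * wt R j) * `|(a - b) / h|.
have Y0 : 0 <= Y.
  by apply: mulr_ge0 => //; apply: mulr_ge0; [exact: Lp_ge0|apply: mulr_ge0; apply: wt_ge0].
apply: le_trans (_ : (n%:R * h)^-1 * \sum_(1 <= l < n.+1) Y * indo (zz b l) (zz a l) <= _).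
  apply: ler_wpM2l; first by rewrite invr_ge0 ltW.
  apply: (le_trans (ler_norm_sum _ _ _)); apply: ler_sum => l _.
  rewrite -mulrBl normrM [`|f^-1|]ger0_norm; last by rewrite invr_ge0 ltW.
  have H1 := phi_lip K_ge0 K_supp K_ub K_lip LK0 Kmax0 (i + j) (zz b l) (zz a l).
  rewrite zz_diff in H1.
  apply: le_trans (_ : (LK + (i + j)%:R * Kmax) * `|(a - b) / h| * indo (zz b l) (zz a l) * f^-1 <= _).
    by apply: ler_wpM2r; [rewrite invr_ge0 ltW|].
  rewrite mulrAC /Y; apply: ler_wpM2r; first by case: (indo01 (zz b l) (zz a l)) => ->; lra.
  rewrite mulrAC; apply: ler_wpM2r => //.
  rewrite /wt /f (_ : (maxn 1 i)%:R / (i`!)%:R * ((maxn 1 j)%:R / (j`!)%:R) =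
     ((maxn 1 i)%:R * (maxn 1 j)%:R) / ((i`!)%:R * (j`!)%:R)); last first.
    by field; rewrite !pnatr_eq0 -!lt0n !fact_gt0.
  rewrite mulrA; apply: ler_wpM2r; first by rewrite invr_ge0 ltW.
  exact: coef2_le.
rewrite -mulr_sumr.
have Hs : \sum_(1 <= l < n.+1) indo (zz b l) (zz a l) <= 8 * (n%:R * h).
  apply: le_trans (_ : \sum_(1 <= l < n.+1) (ind (zz b l) + ind (zz a l)) <= _).
    by apply: ler_sum => l _; apply: indo_le.
  rewrite big_split /=; have := Nx_le a; have := Nx_le b; lra.
apply: le_trans (_ : (n%:R * h)^-1 * (Y * (8 * (n%:R * h))) <= _).
  by apply: ler_wpM2l; [rewrite invr_ge0 ltW|apply: ler_wpM2l].
rewrite /Y le_eqVlt; apply/orP; left; apply/eqP; field; by rewrite (lt0r_neq0 n_pos) (lt0r_neq0 h_gt0).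
Qed.

Lemma frob_dB a b :
  frob (Bmat K k n h b - Bmat K k n h a) <= 64 * (10/3) ^+ 2 * Lp ^+ 2 * ((a - b) / h) ^+ 2.
Proof.
set D := Bmat K k n h b - Bmat K k n h a.
set Z := 64 * Lp ^+ 2 * ((a - b) / h) ^+ 2.
have Z0 : 0 <= Z by rewrite /Z; apply: mulr_ge0; [apply: mulr_ge0; [lra|apply: sqr_ge0]|apply: sqr_ge0].
apply: le_trans (_ : \sum_(i < k.+1) \sum_(j < k.+1) Z * (wt R i ^+ 2 * wt R j ^+ 2) <= _).
  apply: ler_sum => i _; apply: ler_sum => j _.
  have -> : Z * (wt R i ^+ 2 * wt R j ^+ 2) = (8 * Lp * `|(a - b) / h| * (wt R i * wt R j)) ^+ 2.
    by rewrite /Z -[((a - b) / h) ^+ 2]real_normK ?num_real //; ring.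
  by apply: sq_le; apply: dB_entry.
have Hw := wt_sum R k.+1.
have Hw0 : 0 <= \sum_(i < k.+1) wt R i ^+ 2 by apply: sumr_ge0 => i _; apply: sqr_ge0.
apply: le_trans (_ : Z * ((\sum_(i < k.+1) wt R i ^+ 2) * (\sum_(j < k.+1) wt R j ^+ 2)) <= _).
  rewrite mulr_suml mulr_sumr; apply: ler_sum => i _.
  by rewrite mulr_sumr mulr_sumr; apply: ler_sum => j _; rewrite mulrA.
apply: le_trans (_ : Z * (10/3 * (10/3)) <= _).
  by apply: ler_wpM2l => //; apply: ler_pM.
by rewrite /Z le_eqVlt; apply/orP; left; apply/eqP; ring.
Qed.


Lemma mx_addE (A B : 'M[R]_k.+1) i j : (A + B) i j = A i j + B i j.
Proof. by rewrite mxE. Qed.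
Lemma mx_subE (A B : 'M[R]_k.+1) i j : (A - B) i j = A i j - B i j.
Proof. by rewrite !mxE. Qed.
Lemma cv_addE (A B : 'cV[R]_k.+1) i j : (A + B) i j = A i j + B i j.
Proof. by rewrite mxE. Qed.
Lemma cv_subE (A B : 'cV[R]_k.+1) i j : (A - B) i j = A i j - B i j.
Proof. by rewrite !mxE. Qed.

Lemma sum_delta (F : 'I_k.+1 -> R) : \sum_i Uvec k 0 i 0 * F i = F ord0.
Proof.
rewrite (bigD1 ord0) //= big1 ?addr0; first by rewrite mxE expr0 fact0 divr1 mul1r.
move=> j jn0; rewrite mxE expr0n.
case: (nat_of_ord j =P 0%N) => [j0|]; last by rewrite !mul0r.
by move: jn0; have -> : j = ord0 by apply: val_inj.
Qed.

Lemma lam_le (lam x : R) : (forall v, lam * sqn v <= qf (Bmat K k n h x) v) -> lam <= 4 * Kmax.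
Proof.
move=> H; have := H (Uvec k (0 : R)).
have -> : sqn (Uvec k (0 : R)) = 1.
  rewrite /sqn; under eq_bigr do rewrite expr2; rewrite sum_delta.
  by rewrite mxE expr0 fact0 divr1.
rewrite mulr1 /qf sum_delta mxE; under eq_bigr do rewrite mulrC; rewrite sum_delta B_entry.
move=> Hl; apply: (le_trans Hl).
have nhp := nh_gt0.
rewrite ler_pdivrMl // addn0.
apply: le_trans (_ : \sum_(1 <= l < n.+1) Kmax * ind (zz x l) <= _).
  apply: ler_sum => l _; rewrite fact0 !mulr1n mulr1 invr1 mulr1.
  apply: le_trans (ler_norm _) _; exact: phi_bound.
rewrite -mulr_sumr.
have := Nx_le x; have := Kmax0 => K0 Hn.
apply: le_trans (_ : Kmax * (4 * (n%:R * h)) <= _); first by apply: ler_wpM2l => //; exact: ltW.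
by rewrite le_eqVlt; apply/orP; left; apply/eqP; ring.
Qed.


Section Main.
Variables (lam a b : R).
Hypothesis lam_gt0 : 0 < lam.
Hypothesis Hra : forall v, lam * sqn v <= qf (Bmat K k n h a) v.
Hypothesis Hrb : forall v, lam * sqn v <= qf (Bmat K k n h b) v.

Let c := (n%:R * h)^-1.

Lemma W_sq x l : (forall v, lam * sqn v <= qf (Bmat K k n h x) v) ->
  Wnk K k n h x l ^+ 2 <= c ^+ 2 * (sqn (gv (zz x l)) / lam ^+ 2).
Proof.
move=> Hr; have [_ IB] := inv_bound lam_gt0 Hr.
rewrite W_form exprMn; apply: ler_wpM2l; first exact: sqr_ge0.
apply: le_trans (first_entry_sq _) _; exact: IB.
Qed.

Lemma sum_sqn_gv x : \sum_(1 <= l < n.+1) sqn (gv (zz x l)) <= 10/3 * Kmax ^+ 2 * (4 * (n%:R * h)).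
Proof.
apply: le_trans (_ : \sum_(1 <= l < n.+1) 10/3 * Kmax ^+ 2 * ind (zz x l) <= _).
  by apply: ler_sum => l _; apply: sqn_gv.
rewrite -mulr_sumr; apply: ler_wpM2l; last exact: Nx_le.
by apply: mulr_ge0; [lra|apply: sqr_ge0].
Qed.

Lemma bound_A : \sum_(1 <= l < n.+1) (Wnk K k n h a l - Wnk K k n h b l) ^+ 2
   <= 160/3 * Kmax ^+ 2 / lam ^+ 2 * c.
Proof.
have nhp := nh_gt0.
have lam2 : 0 < lam ^+ 2 by apply: exprn_gt0.
set C := 2 * (c ^+ 2 / lam ^+ 2).
have C0 : 0 <= C by apply: mulr_ge0; [lra|apply: divr_ge0; [apply: sqr_ge0|exact: ltW]].
apply: le_trans (_ : \sum_(1 <= l < n.+1)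
    C * (sqn (gv (zz a l)) + sqn (gv (zz b l))) <= _).
  apply: ler_sum => l _.
  have H1 := W_sq l Hra; have H2 := W_sq l Hrb.
  have := sqr_ge0 (Wnk K k n h a l + Wnk K k n h b l).
  set wa := Wnk K k n h a l in H1 *; set wb := Wnk K k n h b l in H2 *.
  have -> : (wa - wb) ^+ 2 = 2 * wa ^+ 2 + 2 * wb ^+ 2 - (wa + wb) ^+ 2 by ring.
  have -> : C * (sqn (gv (zz a l)) + sqn (gv (zz b l))) =
    2 * (c ^+ 2 * (sqn (gv (zz a l)) / lam ^+ 2)) + 2 * (c ^+ 2 * (sqn (gv (zz b l)) / lam ^+ 2)).
    by rewrite /C; field; apply: lt0r_neq0.
  lra.
rewrite -mulr_sumr big_split /=.
apply: le_trans (_ : C * (2 * (10/3 * Kmax ^+ 2 * (4 * (n%:R * h)))) <= _).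
  apply: ler_wpM2l => //; have := sum_sqn_gv a; have := sum_sqn_gv b; lra.
rewrite /C /c le_eqVlt; apply/orP; left; apply/eqP; field.
by rewrite (lt0r_neq0 lam_gt0) (lt0r_neq0 n_pos) (lt0r_neq0 h_gt0).
Qed.


Lemma W_diff_form l :
  Wnk K k n h a l - Wnk K k n h b l =
  c * ((invmx (Bmat K k n h a) *m (gv (zz a l) - gv (zz b l))) 0 0 +
       (invmx (Bmat K k n h a) *m ((Bmat K k n h b - Bmat K k n h a) *m
           (invmx (Bmat K k n h b) *m gv (zz b l)))) 0 0).
Proof.
have [Ua _] := inv_bound lam_gt0 Hra; have [Ub _] := inv_bound lam_gt0 Hrb.
rewrite !W_form -mulrBr; congr (_ * _).
rewrite -cv_addE -cv_subE; congr (_ _ _).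
rewrite mulmxBl !mulmxBr mulKVmx // mulKmx //.
by rewrite addrA subrK.
Qed.

Lemma per_l_B l :
  (Wnk K k n h a l - Wnk K k n h b l) ^+ 2 <=
  c ^+ 2 * (5 * (sqn (gv (zz a l) - gv (zz b l)) / lam ^+ 2) +
     5/4 * (frob (Bmat K k n h b - Bmat K k n h a) * (sqn (gv (zz b l)) / lam ^+ 2) / lam ^+ 2)).
Proof.
have [Ua IBa] := inv_bound lam_gt0 Hra; have [Ub IBb] := inv_bound lam_gt0 Hrb.
have lam2 : 0 < lam ^+ 2 by apply: exprn_gt0.
rewrite W_diff_form exprMn; apply: ler_wpM2l; first exact: sqr_ge0.
set P := invmx _ *m (gv _ - gv _).
set Y := invmx (Bmat K k n h b) *m gv (zz b l).
set Q := invmx _ *m (_ *m Y).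
have HP : P 0 0 ^+ 2 <= sqn (gv (zz a l) - gv (zz b l)) / lam ^+ 2.
  by apply: le_trans (first_entry_sq _) _; apply: IBa.
have HQ : Q 0 0 ^+ 2 <= frob (Bmat K k n h b - Bmat K k n h a) * (sqn (gv (zz b l)) / lam ^+ 2) / lam ^+ 2.
  apply: le_trans (first_entry_sq _) _; apply: le_trans (IBa _) _.
  rewrite ler_pM2r ?invr_gt0 //.
  apply: le_trans (MV_bound _ _) _; apply: ler_wpM2l; first exact: frob_ge0.
  exact: IBb.
have := sqr_ge0 (2 * P 0 0 - Q 0 0 / 2).
have -> : (P 0 0 + Q 0 0) ^+ 2 = 5 * P 0 0 ^+ 2 + 5/4 * Q 0 0 ^+ 2 - (2 * P 0 0 - Q 0 0 / 2) ^+ 2 by field.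
lra.
Qed.


Lemma sum_factor (r : seq nat) (f : nat -> R) (al be ga : R) :
  \sum_(l <- r) al * (be * (f l / ga) / ga) = al * (be * ((\sum_(l <- r) f l) / ga) / ga).
Proof. by rewrite mulr_suml mulr_sumr mulr_suml mulr_sumr. Qed.

Lemma sum_sqn_dgv : \sum_(1 <= l < n.+1) sqn (gv (zz a l) - gv (zz b l))
   <= 80/3 * Lp ^+ 2 * ((a - b) / h) ^+ 2 * (n%:R * h).
Proof.
set D2 := ((a - b) / h) ^+ 2.
apply: le_trans (_ : \sum_(1 <= l < n.+1) 10/3 * Lp ^+ 2 * D2 * indo (zz a l) (zz b l) <= _).
  apply: ler_sum => l _; apply: le_trans (sqn_dgv _ _) _.
  by rewrite (_ : (zz a l - zz b l) ^+ 2 = D2) // /D2 -(zz_diff a b l); ring.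
rewrite -mulr_sumr.
have Hs : \sum_(1 <= l < n.+1) indo (zz a l) (zz b l) <= 8 * (n%:R * h).
  apply: le_trans (_ : \sum_(1 <= l < n.+1) (ind (zz a l) + ind (zz b l)) <= _).
    by apply: ler_sum => l _; apply: indo_le.
  rewrite big_split /=; have := Nx_le a; have := Nx_le b; lra.
apply: le_trans (_ : 10/3 * Lp ^+ 2 * D2 * (8 * (n%:R * h)) <= _).
  apply: ler_wpM2l => //; apply: mulr_ge0; [apply: mulr_ge0; [lra|apply: sqr_ge0]|apply: sqr_ge0].
by rewrite le_eqVlt; apply/orP; left; apply/eqP; ring.
Qed.

Lemma bound_B : \sum_(1 <= l < n.+1) (Wnk K k n h a l - Wnk K k n h b l) ^+ 2
   <= 14000 * Kmax ^+ 2 * Lp ^+ 2 * ((a - b) / h) ^+ 2 / lam ^+ 4 * c.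
Proof.
have nhp := nh_gt0.
have lam2 : 0 < lam ^+ 2 by apply: exprn_gt0.
have lK := lam_le Hra.
set D2 := ((a - b) / h) ^+ 2.
set F := frob (Bmat K k n h b - Bmat K k n h a).
have F0 : 0 <= F by apply: frob_ge0.
have HF : F <= 64 * (10/3) ^+ 2 * Lp ^+ 2 * D2 by apply: frob_dB.
set S1 := \sum_(1 <= l < n.+1) sqn (gv (zz a l) - gv (zz b l)).
set S2 := \sum_(1 <= l < n.+1) sqn (gv (zz b l)).
have HS1 : S1 <= 80/3 * Lp ^+ 2 * D2 * (n%:R * h) by apply: sum_sqn_dgv.
have HS2 : S2 <= 10/3 * Kmax ^+ 2 * (4 * (n%:R * h)) by apply: sum_sqn_gv.
have S20 : 0 <= S2 by apply: sumr_ge0 => l _; apply: sqn_ge0.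
apply: le_trans (_ : c ^+ 2 * (5 * (S1 / lam ^+ 2) + 5/4 * (F * (S2 / lam ^+ 2) / lam ^+ 2)) <= _).
  apply: le_trans (ler_sum _ (fun l _ => per_l_B l)) _.
  rewrite -mulr_sumr; apply: ler_wpM2l; first exact: sqr_ge0.
  rewrite le_eqVlt; apply/orP; left; apply/eqP.
  rewrite big_split /=; congr (_ + _).
    by rewrite /S1 mulr_suml mulr_sumr.
  by rewrite /S2 sum_factor.
have c0 : 0 < c by rewrite /c invr_gt0.
have il2 : 0 < (lam ^+ 2)^-1 by rewrite invr_gt0.
have D20 : 0 <= D2 by apply: sqr_ge0.
have Lp20 : 0 <= Lp ^+ 2 by apply: sqr_ge0.
apply: le_trans (_ : c ^+ 2 * (5 * (80/3 * Lp ^+ 2 * D2 * (n%:R * h) / lam ^+ 2) +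
   5/4 * ((64 * (10/3) ^+ 2 * Lp ^+ 2 * D2) * ((10/3 * Kmax ^+ 2 * (4 * (n%:R * h))) / lam ^+ 2) / lam ^+ 2)) <= _).
  apply: ler_wpM2l; first exact: sqr_ge0.
  apply: lerD.
    by apply: ler_wpM2l; [lra|apply: ler_wpM2r; [exact: ltW|]].
  apply: ler_wpM2l; first lra.
  apply: ler_wpM2r; first exact: ltW.
  apply: ler_pM => //; first by apply: mulr_ge0 => //; exact: ltW.
  by apply: ler_wpM2r; [exact: ltW|].
set q := (lam ^+ 4)^-1.
have q0 : 0 < q by rewrite /q invr_gt0 exprn_gt0.
have Hl2 : (lam ^+ 2)^-1 <= 16 * Kmax ^+ 2 * q.
  have -> : (lam ^+ 2)^-1 = lam ^+ 2 * q by rewrite /q; field; exact: lt0r_neq0.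
  apply: ler_wpM2r; first exact: ltW.
  have -> : 16 * Kmax ^+ 2 = (4 * Kmax) ^+ 2 by ring.
  by apply: sq_le; rewrite ger0_norm //; exact: ltW.
have -> : c ^+ 2 * (5 * (80/3 * Lp ^+ 2 * D2 * (n%:R * h) / lam ^+ 2) +
   5/4 * ((64 * (10/3) ^+ 2 * Lp ^+ 2 * D2) * ((10/3 * Kmax ^+ 2 * (4 * (n%:R * h))) / lam ^+ 2) / lam ^+ 2))
   = (c * Lp ^+ 2 * D2) * (5 * (80/3) * (lam ^+ 2)^-1 + 5/4 * (64 * (10/3) ^+ 2) * (10/3 * 4) * (Kmax ^+ 2 * q)).
  rewrite /c /q; field.
  by rewrite (lt0r_neq0 lam_gt0) (lt0r_neq0 n_pos) (lt0r_neq0 h_gt0).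
have -> : 14000 * Kmax ^+ 2 * Lp ^+ 2 * D2 / lam ^+ 4 * c = (c * Lp ^+ 2 * D2) * (14000 * (Kmax ^+ 2 * q)).
  by rewrite /q; ring.
apply: ler_wpM2l; first by apply: mulr_ge0 => //; apply: mulr_ge0 => //; exact: ltW.
have : 0 <= Kmax ^+ 2 * q by apply: mulr_ge0; [apply: sqr_ge0|exact: ltW].
rewrite -mulrA in Hl2.
lra.
Qed.

End Main.
End Model.

Unset Implicit Arguments.

Theorem mainTheorem16 (R : realType) (K : R -> R)
    (Kmin Kmax Delta LK beta lambda0 h : R) (n : nat) (a b : R)
    (* (K1) *)
    (K_ge0 : forall u, 0 <= K u)
    (K_int : (\int[lebesgue_measure]_x (K x)%:E = 1)%E)
    (K_supp : forall u, 1 < `|u| -> K u = 0)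
    (Kmin_gt0 : 0 < Kmin) (Kmax_gt0 : 0 < Kmax) (Delta_gt0 : 0 < Delta)
    (K_lb : forall u, Kmin * ((`|u| <= Delta)%R : bool)%:R <= K u)
    (K_ub : forall u, K u <= Kmax)
    (* (K2) *)
    (LK_ge0 : 0 <= LK)
    (K_lip : forall u v, `|K u - K v| <= LK * `|u - v|)
    (* order of the local polynomial estimator *)
    (beta_gt0 : 0 < beta)
    (* standing assumptions *)
    (n_gt0 : (0 < n)%N)
    (h_ge : 1 / (2 * n%:R) <= h)
    (lambda0_gt0 : 0 < lambda0)
    (B_eig : forall x : R, 0 <= x <= 1 ->
       forall mu : R, eigenvalue (Bmat K (k0 beta) n h x) mu -> lambda0 <= mu)
    (ha : 0 <= a <= 1) (hb : 0 <= b <= 1) :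
  \sum_(1 <= k < n.+1) (Wnk K (k0 beta) n h a k - Wnk K (k0 beta) n h b k) ^+ 2
  <= Wconst beta Kmax LK lambda0 / n%:R / h ^+ 3 *
     (Num.min (8 * L2c beta Kmax LK / lambda0 * `|a - b|) h) ^+ 2.

Proof.
have hp : 0 < h := h_gt0 n_gt0 h_ge.
have np : 0 < n%:R :> R by rewrite ltr0n.
have Hray : forall x, 0 <= x <= 1 -> forall v, lambda0 * sqn v <= qf (Bmat K (k0 beta) n h x) v.
  move=> x hx; apply: rayleigh; [exact: B_sym | exact: (B_psd K_ge0 n_gt0 h_ge) | exact: B_eig x hx].
have Ra := Hray a ha; have Rb := Hray b hb.
have BA := bound_A K_ge0 K_supp K_ub n_gt0 h_ge lambda0_gt0 Ra Rb.
have BB := bound_B K_ge0 K_supp K_ub K_lip LK_ge0 Kmax_gt0 n_gt0 h_ge lambda0_gt0 Ra Rb.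
set S := \sum_(1 <= l < n.+1) _ in BA BB *.
set Wc := Wconst beta Kmax LK lambda0.
set X := Kmax ^+ 2 / lambda0 ^+ 2.
have X0 : 0 <= X by apply: divr_ge0; apply: sqr_ge0.
have HW : 256 * X <= Wc.
  rewrite /Wc /Wconst le_max; apply/orP; left.
  rewrite /Cstar /X le_eqVlt; apply/orP; left; apply/eqP; field; exact: lt0r_neq0.
set L2 := L2c beta Kmax LK.
have c1 : 1 <= (Num.ceil beta)%:~R :> R by rewrite ler1z -gtz0_ge1 ceil_gt0.
have HL : Lp Kmax LK <= L2.
  rewrite /Lp /L2 /L2c.
  have -> : 2 * (Num.ceil beta)%:~R * Kmax + (Num.ceil beta)%:~R * LK =
     (Num.ceil beta)%:~R * (LK + 2 * Kmax) by ring.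
  rewrite -[X in X <= _]mul1r; apply: ler_wpM2r => //; lra.
have Lp0 : 0 <= Lp Kmax LK by rewrite /Lp; lra.
case: (leP (8 * L2 / lambda0 * `|a - b|) h) => hmin.

  set G := (a - b) ^+ 2 / (lambda0 ^+ 2 * n%:R * h ^+ 3).
  have G0 : 0 <= G.
    apply: divr_ge0; first exact: sqr_ge0.
    by apply: mulr_ge0; [apply: mulr_ge0; [apply: sqr_ge0|exact: ltW]|apply: exprn_ge0; exact: ltW].
  have E1 : 14000 * Kmax ^+ 2 * Lp Kmax LK ^+ 2 * ((a - b) / h) ^+ 2 / lambda0 ^+ 4 * (n%:R * h)^-1
      = 14000 * (Lp Kmax LK ^+ 2 * (X * G)).
    rewrite /X /G; field.
    by rewrite (lt0r_neq0 lambda0_gt0) (lt0r_neq0 np) (lt0r_neq0 hp).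
  have E2 : Wc / n%:R / h ^+ 3 * (8 * L2 / lambda0 * `|a - b|) ^+ 2 = 64 * (Wc * (L2 ^+ 2 * G)).
    rewrite exprMn real_normK ?num_real // /G; field.
    by rewrite (lt0r_neq0 lambda0_gt0) (lt0r_neq0 np) (lt0r_neq0 hp).
  rewrite E1 in BB; rewrite E2; apply: (le_trans BB).
  have XG0 : 0 <= X * G by apply: mulr_ge0.
  have HL2 : Lp Kmax LK ^+ 2 <= L2 ^+ 2 by apply: sq_le; rewrite ger0_norm.
  apply: le_trans (_ : 64 * (256 * X * (L2 ^+ 2 * G)) <= _).
    have -> : 64 * (256 * X * (L2 ^+ 2 * G)) = 16384 * (L2 ^+ 2 * (X * G)) by ring.
    have : Lp Kmax LK ^+ 2 * (X * G) <= L2 ^+ 2 * (X * G) by apply: ler_wpM2r.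
    have : 0 <= Lp Kmax LK ^+ 2 * (X * G) by apply: mulr_ge0 => //; apply: sqr_ge0.
    lra.
  apply: ler_wpM2l; first lra.
  apply: ler_wpM2r => //; apply: mulr_ge0 => //; apply: sqr_ge0.

have E : Wc / n%:R / h ^+ 3 * h ^+ 2 = Wc * (n%:R * h)^-1.
  by field; rewrite (lt0r_neq0 np) (lt0r_neq0 hp).
rewrite E; apply: (le_trans BA).
have c0 : 0 <= (n%:R * h)^-1 by rewrite invr_ge0 ltW // mulr_gt0.
apply: ler_wpM2r => //.
rewrite (_ : 160/3 * Kmax ^+ 2 / lambda0 ^+ 2 = 160/3 * X); last by rewrite /X; field; exact: lt0r_neq0.
lra.
Qed.
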